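(* Let $X$ be a simplicial complex with vertex set $V$ and $1$-skeleton $\mathcal G$. Let $\hat d$ be a metric on $V$ that is $(A,B)$-quasi-isometric to $d_{\mathcal G}$ for constants $A\ge1$, $B\ge0$, i.e. $\frac1A d_{\mathcal G}(u,v)-B\le \hat d(u,v)\le A\,d_{\mathcal G}(u,v)+B$ for all $u,v\in V$. Then there is a metric $\tilde d$ on $X$ extending $\hat d$ (namely $\tilde d(x,y)=\min\{\hat D(x,y),3(A+B)d_X(x,y)\}$) such that: (1) if $x,y\in X$ have disjoint supports then $\tilde d(x,y)=\hat D(x,y)$; (2) there is a constant $B'\ge0$ (one may take $B'=2(A+B)$) such that for all $x,y\in X$, \[\hat D(x,y)-B'\le \tilde d(x,y)\le \hat D(x,y)+B'.\]
   Context: Points $x\in X$ have barycentric coordinates $(x_u)_{u\in V}$ (finitely many nonzero, summing to $1$); $\mathrm{supp}(x)=\{u\in V:x_u\neq0\}$. $\hat D(x,y)=\sum_{u,v\in V}x_uy_v\,\hat d(u,v)$ is the bilinear extension of $\hat d$. $d_{\mathcal G}$ is the word metric on the $1$-skeleton (every edge length $1$). For a simplex $\sigma$ and $x,y\in\sigma$, $d_\sigma(x,y)=\tfrac12\sum_{u\in V(\sigma)}|x_u-y_u|$; a path from $x$ to $y$ is a sequence $x=a_0,\dots,a_r=y$ with consecutive points in a common simplex $\sigma_i$, of length $\sum_i d_{\sigma_i}(a_{i-1},a_i)$; the $\ell^1$-path metric $d_X(x,y)$ is the infimum of lengths of such paths. *)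

(* Defs.v *)
From Stdlib Require Import Reals Lra List Classical ClassicalEpsilon.
Import ListNotations.
Open Scope R_scope.

Section Defs.
Variable V : Type.
Variable K : list V -> Prop.

Definition simplicial_complex : Prop :=
  (forall v : V, K [v]) /\ (forall s t : list V, K s -> incl t s -> K t).

Definition lsum (s : list V) (f : V -> R) : R :=
  fold_right (fun u acc => f u + acc) 0 s.

Definition fin_supp (x : V -> R) : Prop :=
  exists s : list V, NoDup s /\ forall u, x u <> 0 -> In u s.

Definition supp_list (x : V -> R) : list V :=
  match excluded_middle_informative (fin_supp x) with
  | left H => proj1_sig (constructive_indefinite_description _ H)
  | right _ => nil
  end.

(* x is a point of the geometric realisation X *)
Definition point (x : V -> R) : Prop :=
  (forall u, 0 <= x u) /\
  (exists s, K s /\ forall u, x u <> 0 -> In u s) /\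
  lsum (supp_list x) x = 1.

Definition vtx (v : V) : V -> R :=
  fun u => if excluded_middle_informative (u = v) then 1 else 0.

Definition Dhat (dh : V -> V -> R) (x y : V -> R) : R :=
  lsum (supp_list x) (fun u => lsum (supp_list y) (fun v => x u * y v * dh u v)).

Definition edge (u v : V) : Prop := u <> v /\ K [u; v].

Inductive walk : V -> V -> nat -> Prop :=
| walk_nil u : walk u u 0
| walk_cons u w v n : edge u w -> walk w v n -> walk u v (S n).

Definition graph_dist (u v : V) (n : nat) : Prop :=
  walk u v n /\ forall m, walk u v m -> (n <= m)%nat.

(* l^1 simplex distance, for a duplicate-free vertex list s of a simplex *)
Definition dsig (s : list V) (x y : V -> R) : R :=
  / 2 * lsum s (fun u => Rabs (x u - y u)).

Inductive path_len : (V -> R) -> (V -> R) -> R -> Prop :=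
| pl_nil x : point x -> path_len x x 0
| pl_cons x z y s L :
    K s -> NoDup s -> point x -> point z ->
    (forall u, x u <> 0 -> In u s) -> (forall u, z u <> 0 -> In u s) ->
    path_len z y L -> path_len x y (dsig s x z + L).

Definition is_glb (E : R -> Prop) (m : R) : Prop :=
  (forall L, E L -> m <= L) /\ (forall b, (forall L, E L -> b <= L) -> b <= m).

Definition dX_is (x y : V -> R) (r : R) : Prop := is_glb (path_len x y) r.

End Defs.
Arguments simplicial_complex {V}.
Arguments point {V}.
Arguments graph_dist {V}.
Arguments dX_is {V}.
Arguments Dhat {V}.
Arguments vtx {V}.
Arguments lsum {V}.
Arguments supp_list {V}.
Arguments path_len {V}.
Arguments dsig {V}.
Arguments edge {V}.
Arguments walk {V}.

Definition is_metric {P : Type} (dom : P -> Prop) (d : P -> P -> R) : Prop :=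
  (forall x y, dom x -> dom y -> 0 <= d x y) /\
  (forall x y, dom x -> dom y -> (d x y = 0 <-> x = y)) /\
  (forall x y, dom x -> dom y -> d x y = d y x) /\
  (forall x y z, dom x -> dom y -> dom z -> d x z <= d x y + d y z).

(* Main.v *)
Require Import Defs.
From Stdlib Require Import Reals Lra List Classical ClassicalEpsilon FunctionalExtensionality.
Import ListNotations.
Open Scope R_scope.

Section Sums.
Variable V : Type.

Lemma lsum_nil (f : V -> R) : lsum [] f = 0.
Proof. reflexivity. Qed.
Lemma lsum_cons a s (f : V -> R) : lsum (a :: s) f = f a + lsum s f.
Proof. reflexivity. Qed.

Lemma lsum_app s t (f : V -> R) : lsum (s ++ t) f = lsum s f + lsum t f.
Proof. induction s; cbn [app]. rewrite lsum_nil; ring. rewrite !lsum_cons. rewrite IHs. ring. Qed.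

Lemma lsum_ext s (f g : V -> R) : (forall u, In u s -> f u = g u) -> lsum s f = lsum s g.
Proof. induction s; intros H. reflexivity. rewrite !lsum_cons. rewrite H, IHs; auto. intros; apply H; simpl; auto. simpl; auto. Qed.

Lemma lsum_plus s (f g : V -> R) : lsum s (fun u => f u + g u) = lsum s f + lsum s g.
Proof. induction s. unfold lsum; simpl; ring. rewrite !lsum_cons, IHs. ring. Qed.

Lemma lsum_scal s c (f : V -> R) : lsum s (fun u => c * f u) = c * lsum s f.
Proof. induction s. unfold lsum; simpl; ring. rewrite !lsum_cons, IHs. ring. Qed.

Lemma lsum_scalr s c (f : V -> R) : lsum s (fun u => f u * c) = lsum s f * c.
Proof. induction s. unfold lsum; simpl; ring. rewrite !lsum_cons, IHs. ring. Qed.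

Lemma lsum_le s (f g : V -> R) : (forall u, In u s -> f u <= g u) -> lsum s f <= lsum s g.
Proof. induction s; intros H. unfold lsum; simpl; lra. rewrite !lsum_cons.
 apply Rplus_le_compat. apply H; simpl; auto. apply IHs; intros; apply H; simpl; auto. Qed.

Lemma lsum_nonneg s (f : V -> R) : (forall u, In u s -> 0 <= f u) -> 0 <= lsum s f.
Proof. intros H. replace 0 with (lsum s (fun _ => 0)). apply lsum_le; auto.
 induction s. reflexivity. rewrite lsum_cons, IHs. ring. intros; apply H; simpl; auto. Qed.

Lemma lsum_zero s (f : V -> R) : (forall u, In u s -> f u = 0) -> lsum s f = 0.
Proof. induction s; intros H. reflexivity. rewrite lsum_cons, H, IHs. ring.
 intros; apply H; simpl; auto. simpl; auto. Qed.

Lemma lsum_abs s (f : V -> R) : Rabs (lsum s f) <= lsum s (fun u => Rabs (f u)).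
Proof. induction s. unfold lsum; simpl. rewrite Rabs_R0; lra. rewrite !lsum_cons.
 eapply Rle_trans. apply Rabs_triang. lra. Qed.

Lemma lsum_swap s t (F : V -> V -> R) :
  lsum s (fun u => lsum t (fun v => F u v)) = lsum t (fun v => lsum s (fun u => F u v)).
Proof. induction s. simpl. rewrite lsum_zero; auto. rewrite lsum_cons, IHs.
 rewrite <- lsum_plus. apply lsum_ext. intros; rewrite lsum_cons; reflexivity. Qed.

Lemma lsum_zero_each s (f : V -> R) : (forall u, In u s -> 0 <= f u) -> lsum s f = 0 ->
  forall u, In u s -> f u = 0.
Proof. induction s; intros H E u Hu. destruct Hu. rewrite lsum_cons in E.
 assert (0 <= f a) by (apply H; simpl; auto).
 assert (0 <= lsum s f) by (apply lsum_nonneg; intros; apply H; simpl; auto).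
 destruct Hu as [<-|Hu]. lra. apply IHs; auto. intros; apply H; simpl; auto. lra. Qed.

Lemma lsum_nonzero s (f : V -> R) : lsum s f <> 0 -> exists u, In u s /\ f u <> 0.
Proof. intros H. apply NNPP; intro C. apply H. apply lsum_zero. intros u Hu.
 apply NNPP; intro D. apply C; eauto. Qed.

Lemma lsum_indep_gen s : forall t (f : V -> R), NoDup s -> NoDup t ->
  (forall u, f u <> 0 -> (In u s <-> In u t)) -> lsum s f = lsum t f.
Proof. induction s as [|a s IH]; intros t f Ns Nt H.
 - rewrite lsum_nil. symmetry. apply lsum_zero. intros u Hu. apply NNPP; intro C.
   apply (proj2 (H u C)) in Hu. destruct Hu.
 - inversion Ns; subst. rewrite lsum_cons.
   destruct (Req_dec (f a) 0) as [Fa|Fa].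
   + rewrite Fa, Rplus_0_l. apply IH; auto. intros u Fu. rewrite <- H by auto.
     split. intros; simpl; auto. intros [<-|?]; [contradiction|auto].
   + assert (Ha : In a t) by (apply H; simpl; auto).
     destruct (in_split _ _ Ha) as [t1 [t2 ->]].
     rewrite lsum_app, lsum_cons. rewrite (IH (t1 ++ t2)).
     rewrite lsum_app. ring. auto. eapply NoDup_remove_1; eauto.
     intros u Fu. specialize (H u Fu). pose proof (NoDup_remove_2 _ _ _ Nt) as Na.
     rewrite !in_app_iff in *. simpl in H. split.
     * intros Hu. assert (u <> a) by (intro; subst; contradiction).
       destruct (proj1 H (or_intror Hu)) as [?|[?|?]]; auto. congruence.
     * intros Hu. assert (u <> a) by (intro E; rewrite E in Hu; apply Na; exact Hu).
       destruct (proj2 H (ltac:(destruct Hu; auto))) as [?|?]; auto. congruence.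
Qed.

Lemma lsum_indep s t (f : V -> R) : NoDup s -> NoDup t ->
  (forall u, f u <> 0 -> In u s) -> (forall u, f u <> 0 -> In u t) -> lsum s f = lsum t f.
Proof. intros. apply lsum_indep_gen; auto. intros u Fu; split; auto. Qed.

End Sums.
Section Pts.
Variable V : Type.
Variable K : list V -> Prop.
Hypothesis HK : simplicial_complex K.

Definition deq : forall a b : V, {a = b} + {a <> b} := fun a b => excluded_middle_informative (a = b).

Lemma supp_list_spec x : fin_supp V x -> NoDup (supp_list x) /\ forall u, x u <> 0 -> In u (supp_list x).
Proof. intros H. unfold supp_list. destruct excluded_middle_informative as [H'|H']; [|contradiction].
 destruct constructive_indefinite_description as [s Hs]. simpl. exact Hs. Qed.

Lemma point_simplex x : point K x -> exists s, K s /\ NoDup s /\ forall u, x u <> 0 -> In u s.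
Proof. intros [_ [[s [Ks Hs]] _]]. exists (nodup deq s). split; [|split].
 apply (proj2 HK s). auto. intros u; rewrite nodup_In; auto.
 apply NoDup_nodup. intros u Hu; rewrite nodup_In; auto. Qed.

Lemma point_fin x : point K x -> fin_supp V x.
Proof. intros P. destruct (point_simplex x P) as [s [_ [N H]]]. exists s; auto. Qed.

Lemma point_sl x : point K x -> NoDup (supp_list x) /\ forall u, x u <> 0 -> In u (supp_list x).
Proof. intros P; apply supp_list_spec, point_fin, P. Qed.

Lemma point_nonneg x u : point K x -> 0 <= x u.
Proof. intros [H _]; apply H. Qed.

Lemma E_indep x s g : point K x -> NoDup s -> (forall u, x u <> 0 -> In u s) ->
  lsum s (fun w => x w * g w) = lsum (supp_list x) (fun w => x w * g w).
Proof. intros P N H. destruct (point_sl x P) as [N' H'].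
 apply lsum_indep; auto; intros u Hu; [apply H|apply H']; intro E; apply Hu; rewrite E; ring. Qed.

Lemma point_sum x s : point K x -> NoDup s -> (forall u, x u <> 0 -> In u s) -> lsum s x = 1.
Proof. intros P N H. destruct P as [P1 [P2 P3]]. rewrite <- P3.
 destruct (point_sl x (conj P1 (conj P2 P3))) as [N' H']. apply lsum_indep; auto. Qed.

Lemma point_ex x : point K x -> exists u, x u <> 0.
Proof. intros P. destruct (point_sl x P) as [N H]. pose proof (point_sum x _ P N H).
 destruct (lsum_nonzero _ (supp_list x) x) as [u [_ Hu]]. lra. eauto. Qed.

Lemma Dhat_lists dh x y sx sy : point K x -> point K y -> NoDup sx -> NoDup sy ->
  (forall u, x u <> 0 -> In u sx) -> (forall u, y u <> 0 -> In u sy) ->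
  Dhat dh x y = lsum sx (fun u => lsum sy (fun v => x u * y v * dh u v)).
Proof. intros Px Py Nx Ny Hx Hy. unfold Dhat.
 destruct (point_sl x Px) as [Nx' Hx']. destruct (point_sl y Py) as [Ny' Hy'].
 transitivity (lsum (supp_list x) (fun u => lsum sy (fun v => x u * y v * dh u v))).
 apply lsum_ext. intros u _. apply lsum_indep; auto; intros v Hv;
   [apply Hy'|apply Hy]; intro E; apply Hv; rewrite E; ring.
 apply lsum_indep; auto; intros u Hu; [apply Hx'|apply Hx]; intro E; apply Hu;
   apply lsum_zero; intros; rewrite E; ring. Qed.

Lemma vtx_supp (u w : V) : vtx u w <> 0 -> w = u.
Proof. unfold vtx. destruct excluded_middle_informative; auto. intros C; contradiction C; reflexivity. Qed.

Lemma vtx_u (u : V) : vtx u u = 1.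
Proof. unfold vtx. destruct excluded_middle_informative; auto. contradiction n; auto. Qed.

Lemma vtx_range (u w : V) : 0 <= vtx u w <= 1.
Proof. unfold vtx. destruct excluded_middle_informative; lra. Qed.

Lemma NoDup1 (u : V) : NoDup [u].
Proof. constructor. intros []. constructor. Qed.

Lemma vtx_point (u : V) : point K (vtx u).
Proof. split; [|split]. intros w; apply vtx_range.
 exists [u]. split. apply (proj1 HK). intros w Hw; left; symmetry; apply vtx_supp; auto.
 assert (F : fin_supp V (vtx u)). exists [u]; split. apply NoDup1. intros w Hw; left; symmetry; apply vtx_supp; auto.
 destruct (supp_list_spec _ F) as [N H].
 transitivity (lsum [u] (vtx u)). apply lsum_indep; auto. apply NoDup1.
 intros w Hw; left; symmetry; apply vtx_supp; auto.
 rewrite lsum_cons, lsum_nil, vtx_u. ring. Qed.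

Lemma E_vtx x u : point K x -> lsum (supp_list x) (fun w => x w * vtx u w) = x u.
Proof. intros P. destruct (point_sl x P) as [N H].
 transitivity (lsum [u] (fun w => x w * vtx u w)). apply lsum_indep; auto. apply NoDup1.
 intros w Hw; apply H; intro E; apply Hw; rewrite E; ring.
 intros w Hw; left; symmetry; apply vtx_supp; intro E; apply Hw; rewrite E; ring.
 rewrite lsum_cons, lsum_nil, vtx_u. ring. Qed.

End Pts.
Section Lip.
Variable V : Type.

Lemma lsum_center s (a b g : V -> R) m :
  lsum s (fun w => a w * g w) - lsum s (fun w => b w * g w) =
  lsum s (fun w => (a w - b w) * (g w - m)) + m * (lsum s a - lsum s b).
Proof. induction s. rewrite !lsum_nil; ring. rewrite !lsum_cons. lra. Qed.

Lemma lip_core s (a b g : V -> R) c M : lsum s a = lsum s b ->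
  (forall w, In w s -> c <= g w <= c + M) ->
  Rabs (lsum s (fun w => a w * g w) - lsum s (fun w => b w * g w)) <= M * dsig s a b.
Proof. intros E H. rewrite (lsum_center s a b g (c + M/2)), E, Rminus_diag, Rmult_0_r, Rplus_0_r.
 eapply Rle_trans; [apply lsum_abs|].
 transitivity (lsum s (fun w => (M/2) * Rabs (a w - b w))).
 - apply lsum_le. intros u Hu. rewrite Rabs_mult, Rmult_comm. apply Rmult_le_compat_r.
   apply Rabs_pos. apply Rabs_le. specialize (H u Hu). lra.
 - rewrite lsum_scal. unfold dsig. right. unfold Rdiv. ring. Qed.

Lemma list_min s (g : V -> R) : s <> [] -> exists w0, In w0 s /\ forall w, In w s -> g w0 <= g w.
Proof. induction s as [|a s IH]; intros H. contradiction. destruct s as [|b s'].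
 - exists a. split. left; auto. intros w [<-|[]]; lra.
 - destruct IH as [w0 [Hw0 Hm]]. discriminate.
   destruct (Rle_dec (g a) (g w0)).
   + exists a. split. left; auto. intros w [<-|Hw]. lra. specialize (Hm w Hw); lra.
   + exists w0. split. right; auto. intros w [<-|Hw]. lra. auto. Qed.

Lemma dsig_nonneg s (x z : V -> R) : 0 <= dsig s x z.
Proof. unfold dsig. apply Rmult_le_pos. lra. apply lsum_nonneg. intros; apply Rabs_pos. Qed.

Lemma dsig_sym s (x z : V -> R) : dsig s x z = dsig s z x.
Proof. unfold dsig. f_equal. apply lsum_ext. intros; apply Rabs_minus_sym. Qed.

Lemma glb_exists (E : R -> Prop) : (exists L, E L) -> (forall L, E L -> 0 <= L) -> exists m, is_glb E m.
Proof. intros [L0 H0] Hp.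
 destruct (completeness (fun t => E (- t))) as [m [Hu Hl]].
 - exists 0. intros t Ht. specialize (Hp _ Ht). lra.
 - exists (- L0). rewrite Ropp_involutive. auto.
 - exists (- m). split.
   + intros L HL. assert (- L <= m). apply Hu. rewrite Ropp_involutive; auto. lra.
   + intros b Hb. assert (m <= - b). apply Hl. intros t Ht. specialize (Hb _ Ht). lra. lra.
Qed.

Lemma glb_unique (E : R -> Prop) r1 r2 : is_glb E r1 -> is_glb E r2 -> r1 = r2.
Proof. intros [A1 B1] [A2 B2]. apply Rle_antisym; auto. Qed.

End Lip.

Section Paths.
Variable V : Type.
Variable K : list V -> Prop.
Hypothesis HK : simplicial_complex K.

Definition Ex (x g : V -> R) := lsum (supp_list x) (fun w => x w * g w).

Definition lipcond (g : V -> R) M := forall s, K s -> forall w w', In w s -> In w' s -> g w <= g w' + M.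

Lemma step_lip x z s g M : K s -> NoDup s -> point K x -> point K z ->
  (forall u, x u <> 0 -> In u s) -> (forall u, z u <> 0 -> In u s) -> lipcond g M ->
  Rabs (Ex x g - Ex z g) <= M * dsig s x z.
Proof. intros Ks N Px Pz Hx Hz Hg. unfold Ex.
 rewrite <- (E_indep V K HK x s g), <- (E_indep V K HK z s g); auto.
 destruct s as [|a s0] eqn:Es.
 - pose proof (point_sum V K HK x [] Px N Hx). rewrite lsum_nil in H. lra.
 - rewrite <- Es in *. destruct (list_min V s g) as [w0 [Hw0 Hm]]. rewrite Es; discriminate.
   apply (lip_core V s x z g (g w0) M).
   rewrite (point_sum V K HK x s), (point_sum V K HK z s); auto.
   intros w Hw. split. auto. apply Hg with s; auto. Qed.

Lemma path_lip g M x y L : lipcond g M -> path_len K x y L -> Rabs (Ex x g - Ex y g) <= M * L.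
Proof. intros Hg H. induction H.
 - rewrite Rminus_diag, Rabs_R0. lra.
 - pose proof (step_lip x z s g M H H0 H1 H2 H3 H4 Hg).
   replace (Ex x g - Ex y g) with ((Ex x g - Ex z g) + (Ex z g - Ex y g)) by ring.
   eapply Rle_trans. apply Rabs_triang. rewrite Rmult_plus_distr_l. lra. Qed.

Lemma path_nonneg x y L : path_len K x y L -> 0 <= L.
Proof. intros H; induction H. lra. pose proof (dsig_nonneg V s x z). lra. Qed.

Lemma path_point x y L : path_len K x y L -> point K x /\ point K y.
Proof. intros H; induction H; tauto. Qed.

Lemma path_concat x y z L1 L2 : path_len K x y L1 -> path_len K y z L2 -> path_len K x z (L1 + L2).
Proof. intros H; revert z L2; induction H; intros z' L2 H'.
 - rewrite Rplus_0_l; auto.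
 - rewrite Rplus_assoc. eapply pl_cons; eauto. Qed.

Lemma path_step x z s : K s -> NoDup s -> point K x -> point K z ->
  (forall u, x u <> 0 -> In u s) -> (forall u, z u <> 0 -> In u s) -> path_len K x z (dsig s x z).
Proof. intros. rewrite <- (Rplus_0_r (dsig s x z)). eapply pl_cons; eauto. constructor; auto. Qed.

Lemma path_rev x y L : path_len K x y L -> path_len K y x L.
Proof. intros H; induction H. constructor; auto.
 rewrite Rplus_comm. eapply path_concat. eauto. rewrite dsig_sym. apply path_step; auto. Qed.

Lemma path_to_vtx x u : point K x -> x u <> 0 -> exists L, path_len K x (vtx u) L.
Proof. intros P Hu. destruct (point_simplex V K HK x P) as [s [Ks [N Hs]]].
 exists (dsig s x (vtx u)). apply path_step; auto. apply vtx_point; auto.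
 intros w Hw. apply vtx_supp in Hw. subst; auto. Qed.

Lemma walk_path u v n : walk K u v n -> exists L, path_len K (vtx u) (vtx v) L.
Proof. intros H; induction H. exists 0. constructor. apply vtx_point; auto.
 destruct IHwalk as [L HL]. destruct H as [Nuw Kuw].
 exists (dsig [u; w] (vtx u) (vtx w) + L). eapply pl_cons; eauto.
 constructor. intros [E|[]]. auto. apply NoDup1.
 apply vtx_point; auto. apply vtx_point; auto.
 intros a Ha; apply vtx_supp in Ha; subst; simpl; auto.
 intros a Ha; apply vtx_supp in Ha; subst; simpl; auto. Qed.

Lemma path_exists x y : point K x -> point K y -> (forall u v, exists n, walk K u v n) ->
  exists L, path_len K x y L.
Proof. intros Px Py W. destruct (point_ex V K HK x Px) as [u Hu].
 destruct (point_ex V K HK y Py) as [v Hv].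
 destruct (path_to_vtx x u Px Hu) as [L1 H1]. destruct (path_to_vtx y v Py Hv) as [L3 H3].
 destruct (W u v) as [n Hn]. destruct (walk_path u v n Hn) as [L2 H2].
 exists (L1 + L2 + L3). eapply path_concat. eapply path_concat; eauto. apply path_rev; eauto. Qed.

Lemma dX_lip g M x y r : 0 < M -> lipcond g M -> dX_is K x y r -> Rabs (Ex x g - Ex y g) <= M * r.
Proof. intros HM Hg [_ Hr].
 assert (Rabs (Ex x g - Ex y g) / M <= r).
 { apply Hr. intros L HL. pose proof (path_lip g M x y L Hg HL).
   apply (Rmult_le_reg_l M); auto. replace (M * (Rabs (Ex x g - Ex y g) / M)) with (Rabs (Ex x g - Ex y g)) by (field; lra). auto. }
 replace (Rabs (Ex x g - Ex y g)) with (M * (Rabs (Ex x g - Ex y g) / M)) by (field; lra).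
 apply Rmult_le_compat_l; lra. Qed.

Lemma dX_nonneg x y r : point K x -> point K y -> (forall u v, exists n, walk K u v n) -> dX_is K x y r -> 0 <= r.
Proof. intros Px Py W [_ H]. apply H. intros L HL; eapply path_nonneg; eauto. Qed.

Lemma dX_refl x : point K x -> dX_is K x x 0.
Proof. intros P. split. intros L HL; eapply path_nonneg; eauto. intros b Hb. apply Hb. constructor; auto. Qed.

Lemma dX_sym x y r : dX_is K x y r -> dX_is K y x r.
Proof. intros [A B]. split. intros L HL; apply A, path_rev, HL. intros b Hb; apply B. intros L HL; apply Hb, path_rev, HL. Qed.

Lemma dX_tri x y z p q r : dX_is K x y p -> dX_is K y z q -> dX_is K x z r -> r <= p + q.
Proof. intros [Ap Bp] [Aq Bq] [Ar Br].
 assert (forall L2, path_len K y z L2 -> r - L2 <= p).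
 { intros L2 H2. apply Bp. intros L1 H1. pose proof (Ar _ (path_concat _ _ _ _ _ H1 H2)). lra. }
 assert (r - p <= q). apply Bq. intros L2 H2. specialize (H _ H2). lra. lra. Qed.

Lemma dX_exists x y : point K x -> point K y -> (forall u v, exists n, walk K u v n) -> exists r, dX_is K x y r.
Proof. intros Px Py W. apply glb_exists. apply path_exists; auto. intros L; apply path_nonneg. Qed.

End Paths.
Section Main.
Variable V : Type.
Variable K : list V -> Prop.
Variable dh : V -> V -> R.
Variables A B : R.
Hypothesis HK : simplicial_complex K.
Hypothesis Hm : is_metric (fun _ : V => True) dh.
Hypothesis HA : 1 <= A.
Hypothesis HB : 0 <= B.
Hypothesis HQ : forall u v : V, exists n : nat, graph_dist K u v n /\
     / A * INR n - B <= dh u v /\ dh u v <= A * INR n + B.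

Lemma dh_nonneg u v : 0 <= dh u v.
Proof. destruct Hm as [H _]; apply H; auto. Qed.
Lemma dh_refl u : dh u u = 0.
Proof. destruct Hm as [_ [H _]]; apply H; auto. Qed.
Lemma dh_zero u v : dh u v = 0 -> u = v.
Proof. destruct Hm as [_ [H _]]; apply H; auto. Qed.
Lemma dh_sym u v : dh u v = dh v u.
Proof. destruct Hm as [_ [_ [H _]]]; apply H; auto. Qed.
Lemma dh_tri u v w : dh u w <= dh u v + dh v w.
Proof. destruct Hm as [_ [_ [_ H]]]; apply H; auto. Qed.

Lemma walks : forall u v, exists n, walk K u v n.
Proof. intros u v. destruct (HQ u v) as [n [[H _] _]]. eauto. Qed.

Lemma dh_simplex s u v : K s -> In u s -> In v s -> dh u v <= A + B.
Proof. intros Ks Hu Hv. destruct (HQ u v) as [n [[Hw Hmin] [_ Hup]]].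
 destruct (classic (u = v)) as [E|E]. subst. rewrite dh_refl. lra.
 assert (W : walk K u v 1). apply walk_cons with v. split; auto.
   apply (proj2 HK s); auto. intros a [<-|[<-|[]]]; auto. constructor.
 specialize (Hmin 1%nat W). apply le_INR in Hmin. simpl in Hmin.
 assert (A * INR n <= A * 1) by (apply Rmult_le_compat_l; lra). lra. Qed.

Definition hx (x : V -> R) (v : V) := lsum (supp_list x) (fun u => x u * dh u v).

Lemma hx_lip x : point K x -> lipcond V K (hx x) (A + B).
Proof. intros P s Ks w w' Hw Hw'. unfold hx.
 destruct (point_sl V K HK x P) as [N H].
 rewrite <- (Rmult_1_l (A + B)), <- (point_sum V K HK x (supp_list x) P N H).
 rewrite <- lsum_scalr, <- lsum_plus. apply lsum_le. intros u _.
 pose proof (point_nonneg V K x u P). pose proof (dh_tri u w' w). rewrite (dh_sym w' w) in H1.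
 pose proof (dh_simplex s w w' Ks Hw Hw').
 rewrite <- Rmult_plus_distr_l. apply Rmult_le_compat_l; lra. Qed.

Lemma Dhat_E x y : Dhat dh x y = Ex V y (hx x).
Proof. unfold Dhat, Ex, hx.
 transitivity (lsum (supp_list y) (fun v => lsum (supp_list x) (fun u => x u * y v * dh u v))).
 apply lsum_swap. apply lsum_ext. intros v _. rewrite <- lsum_scal. apply lsum_ext; intros; ring. Qed.

Lemma Dhat_sym x y : Dhat dh x y = Dhat dh y x.
Proof. unfold Dhat. rewrite lsum_swap. apply lsum_ext; intros; apply lsum_ext; intros.
 rewrite dh_sym; ring. Qed.

Lemma Dhat_nonneg x y : point K x -> point K y -> 0 <= Dhat dh x y.
Proof. intros Px Py. unfold Dhat. apply lsum_nonneg; intros; apply lsum_nonneg; intros.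
 pose proof (point_nonneg V K x u Px). pose proof (point_nonneg V K y u0 Py). pose proof (dh_nonneg u u0).
 apply Rmult_le_pos; auto. apply Rmult_le_pos; auto. Qed.

Lemma Dhat_lip x y z r : point K x -> dX_is K y z r -> Rabs (Dhat dh x y - Dhat dh x z) <= (A + B) * r.
Proof. intros Px H. rewrite !Dhat_E. apply (dX_lip V K HK); auto. lra. apply hx_lip; auto. Qed.

Lemma Dhat_self x : point K x -> Dhat dh x x <= A + B.
Proof. intros P. destruct (point_simplex V K HK x P) as [s [Ks [N Hs]]].
 rewrite (Dhat_lists V K HK dh x x s s); auto.
 transitivity (lsum s (fun u => lsum s (fun v => (x u * (A + B)) * x v))).
 - apply lsum_le; intros u Hu; apply lsum_le; intros v Hv.
   pose proof (point_nonneg V K x u P). pose proof (point_nonneg V K x v P).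
   pose proof (dh_simplex s u v Ks Hu Hv).
   replace (x u * (A + B) * x v) with ((x u * x v) * (A + B)) by ring.
   apply Rmult_le_compat_l; auto. apply Rmult_le_pos; auto.
 - right. transitivity (lsum s (fun u => x u * (A + B))).
   apply lsum_ext; intros. rewrite lsum_scal, (point_sum V K HK x s); auto; ring.
   rewrite lsum_scalr, (point_sum V K HK x s); auto; ring. Qed.

Lemma Dhat_tri x y z : point K x -> point K y -> point K z ->
  Dhat dh x z <= Dhat dh x y + Dhat dh y z.
Proof. intros Px Py Pz.
 destruct (point_sl V K HK x Px) as [Nx Hx]. destruct (point_sl V K HK y Py) as [Ny Hy].
 destruct (point_sl V K HK z Pz) as [Nz Hz].
 set (sx := supp_list x) in *. set (sy := supp_list y) in *. set (sz := supp_list z) in *.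
 assert (Sy : lsum sy y = 1) by (apply (point_sum V K HK); auto).
 assert (Sx : lsum sx x = 1) by (apply (point_sum V K HK); auto).
 assert (Sz : lsum sz z = 1) by (apply (point_sum V K HK); auto).
 unfold Dhat. fold sx sy sz.
 transitivity (lsum sx (fun u => lsum sz (fun w => lsum sy (fun v =>
     x u * y v * dh u v * z w + y v * x u * z w * dh v w)))).
 - apply lsum_le; intros u Hu; apply lsum_le; intros w Hw.
   transitivity (lsum sy (fun v => y v * (x u * z w * dh u w))).
   + right. rewrite lsum_scalr, Sy. ring.
   + apply lsum_le; intros v Hv.
     pose proof (point_nonneg V K x u Px). pose proof (point_nonneg V K y v Py).
     pose proof (point_nonneg V K z w Pz). pose proof (dh_tri u v w).
     assert (0 <= y v * x u * z w) by (repeat apply Rmult_le_pos; auto).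
     replace (y v * (x u * z w * dh u w)) with ((y v * x u * z w) * dh u w) by ring.
     replace (x u * y v * dh u v * z w + y v * x u * z w * dh v w) with ((y v * x u * z w) * (dh u v + dh v w)) by ring.
     apply Rmult_le_compat_l; auto.
 - right.
   transitivity (lsum sx (fun u => lsum sz (fun w => lsum sy (fun v => x u * y v * dh u v * z w))) +
                 lsum sx (fun u => lsum sz (fun w => lsum sy (fun v => y v * x u * z w * dh v w)))).
   + rewrite <- lsum_plus. apply lsum_ext; intros. rewrite <- lsum_plus. apply lsum_ext; intros.
     rewrite <- lsum_plus. reflexivity.
   + f_equal.
     * apply lsum_ext; intros u _. rewrite lsum_swap. apply lsum_ext; intros v _.
       rewrite lsum_scal, Sz. ring.
     * transitivity (lsum sx (fun u => lsum sy (fun v => lsum sz (fun w => y v * x u * z w * dh v w)))).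
       apply lsum_ext; intros; apply lsum_swap.
       rewrite lsum_swap. apply lsum_ext; intros v _.
       transitivity (lsum sx (fun u => x u * lsum sz (fun w => y v * z w * dh v w))).
       apply lsum_ext; intros. rewrite <- lsum_scal. apply lsum_ext; intros; ring.
       rewrite lsum_scalr, Sx. ring.
Qed.

Lemma Dhat_zero x y : point K x -> point K y -> Dhat dh x y = 0 -> x = y.
Proof. intros Px Py E.
 destruct (point_sl V K HK x Px) as [Nx Hx]. destruct (point_sl V K HK y Py) as [Ny Hy].
 destruct (point_ex V K HK x Px) as [u0 Hu0]. destruct (point_ex V K HK y Py) as [v0 Hv0].
 assert (T : forall u v, x u <> 0 -> y v <> 0 -> u = v).
 { intros u v Hu Hv. unfold Dhat in E.
   assert (E1 := lsum_zero_each V _ _ (fun u Hu => lsum_nonneg V _ _ (fun v Hv =>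
     Rmult_le_pos _ _ (Rmult_le_pos _ _ (point_nonneg V K x u Px) (point_nonneg V K y v Py)) (dh_nonneg u v))) E u (Hx u Hu)).
   assert (E2 := lsum_zero_each V _ _ (fun v Hv =>
     Rmult_le_pos _ _ (Rmult_le_pos _ _ (point_nonneg V K x u Px) (point_nonneg V K y v Py)) (dh_nonneg u v)) E1 v (Hy v Hv)).
   apply dh_zero. destruct (Rmult_integral _ _ E2) as [E3|E3]; auto.
   destruct (Rmult_integral _ _ E3); contradiction. }
 assert (U : u0 = v0) by auto. subst v0.
 assert (X1 : x u0 = 1).
 { rewrite <- (point_sum V K HK x [u0] Px (NoDup1 V u0)). rewrite lsum_cons, lsum_nil; ring.
   intros w Hw; left; symmetry; auto. }
 assert (Y1 : y u0 = 1).
 { rewrite <- (point_sum V K HK y [u0] Py (NoDup1 V u0)). rewrite lsum_cons, lsum_nil; ring.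
   intros w Hw; left; auto. }
 apply functional_extensionality. intros w. destruct (classic (w = u0)) as [->|N]. congruence.
 destruct (Req_dec (x w) 0) as [Xw|Xw]; destruct (Req_dec (y w) 0) as [Yw|Yw];
 first [congruence | exfalso; apply N; apply (T w u0); assumption | exfalso; apply N; symmetry; apply (T u0 w); assumption]. Qed.

Definition dXv (x y : V -> R) : R :=
  match excluded_middle_informative (exists r, dX_is K x y r) with
  | left H => proj1_sig (constructive_indefinite_description _ H)
  | right _ => 0 end.

Lemma dXv_spec x y : point K x -> point K y -> dX_is K x y (dXv x y).
Proof. intros Px Py. unfold dXv. destruct excluded_middle_informative as [H|H].
 destruct constructive_indefinite_description; simpl; auto.
 exfalso; apply H. apply (dX_exists V K HK); auto. apply walks. Qed.

Lemma dXv_eq x y r : point K x -> point K y -> dX_is K x y r -> dXv x y = r.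
Proof. intros Px Py H. eapply glb_unique. apply dXv_spec; auto. apply H. Qed.

Lemma dXv_nonneg x y : point K x -> point K y -> 0 <= dXv x y.
Proof. intros. eapply (dX_nonneg V K x y); eauto. apply walks. apply dXv_spec; auto. Qed.

Lemma dX_zero x y : point K x -> point K y -> dXv x y = 0 -> x = y.
Proof. intros Px Py E. pose proof (dXv_spec x y Px Py) as D. rewrite E in D.
 apply functional_extensionality. intros u.
 assert (L : lipcond V K (vtx u) 1).
 { intros s _ w w' _ _. pose proof (vtx_range V u w). pose proof (vtx_range V u w').
   unfold vtx in *. destruct excluded_middle_informative; destruct excluded_middle_informative; lra. }
 pose proof (dX_lip V K HK (vtx u) 1 x y 0 Rlt_0_1 L D).
 unfold Ex in H. rewrite !(E_vtx V K HK) in H; auto. rewrite Rmult_0_r in H.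
 pose proof (Rabs_pos (x u - y u)). assert (Rabs (x u - y u) = 0) by lra.
 unfold Rabs in H1; destruct Rcase_abs; lra. Qed.

Lemma dX_disj x y : point K x -> point K y -> (forall u, x u <> 0 -> y u = 0) -> 1 <= dXv x y.
Proof. intros Px Py Hd.
 set (g := fun w => if excluded_middle_informative (x w = 0) then 0 else 1).
 assert (L : lipcond V K g 1).
 { intros s _ w w' _ _. unfold g. destruct excluded_middle_informative; destruct excluded_middle_informative; lra. }
 pose proof (dX_lip V K HK g 1 x y _ Rlt_0_1 L (dXv_spec x y Px Py)).
 assert (E1 : Ex V x g = 1).
 { unfold Ex. destruct (point_sl V K HK x Px) as [N H']. rewrite <- (point_sum V K HK x _ Px N H').
   apply lsum_ext; intros w _. unfold g. destruct excluded_middle_informative as [e|e]. rewrite e; ring. ring. }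
 assert (E2 : Ex V y g = 0).
 { unfold Ex. apply lsum_zero. intros w _. unfold g. destruct excluded_middle_informative as [e|e]. ring.
   rewrite (Hd w e). ring. }
 rewrite E1, E2 in H. replace (1 - 0) with 1 in H by ring. rewrite Rabs_R1 in H. lra. Qed.

Definition Defs_dt (x y : V -> R) : R := Rmin (Dhat dh x y) (3 * (A + B) * dXv x y).

Lemma Dhat_le x y : point K x -> point K y -> Dhat dh x y <= (A + B) * (1 + dXv x y).
Proof. intros Px Py. pose proof (Dhat_lip x x y _ Px (dXv_spec x y Px Py)).
 pose proof (Dhat_self x Px). pose proof (Rle_abs (Dhat dh x y - Dhat dh x x)). rewrite Rabs_minus_sym in H.
 rewrite Rmult_plus_distr_l, Rmult_1_r. lra. Qed.

End Main.
Section Fin.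
Variable V : Type.
Variable K : list V -> Prop.
Variable dh : V -> V -> R.
Variables A B : R.
Hypothesis HK : simplicial_complex K.
Hypothesis Hm : is_metric (fun _ : V => True) dh.
Hypothesis HA : 1 <= A.
Hypothesis HB : 0 <= B.
Hypothesis HQ : forall u v : V, exists n : nat, graph_dist K u v n /\
     / A * INR n - B <= dh u v /\ dh u v <= A * INR n + B.

Let dt := Defs_dt V K dh A B.
Let dXv_spec := dXv_spec V K dh A B HK HQ.
Let dXv_eq := dXv_eq V K dh A B HK HQ.
Let dXv_nonneg := dXv_nonneg V K dh A B HK HQ.

Lemma main_sec :
  exists dt : (V -> R) -> (V -> R) -> R,
    is_metric (point K) dt /\
    (forall u v : V, dt (vtx u) (vtx v) = dh u v) /\
    (forall x y r, point K x -> point K y -> dX_is K x y r ->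
        dt x y = Rmin (Dhat dh x y) (3 * (A + B) * r)) /\
    (forall x y, point K x -> point K y ->
        (forall u, x u <> 0 -> y u = 0) -> dt x y = Dhat dh x y) /\
    (forall x y, point K x -> point K y ->
        Dhat dh x y - 2 * (A + B) <= dt x y /\ dt x y <= Dhat dh x y + 2 * (A + B)).
Proof.
 assert (Hle : forall x y, point K x -> point K y -> Dhat dh x y <= (A + B) * (1 + dXv V K x y)).
 { intros; apply (Dhat_le V K dh A B HK Hm HA HB HQ); auto. }
 assert (Hzero : forall x y, point K x -> point K y -> (dt x y = 0 <-> x = y)).
 { intros x y Px Py. unfold dt, Defs_dt. split.
   - unfold Rmin. destruct Rle_dec; intros E.
     apply (Dhat_zero V K dh HK Hm); auto.
     apply (dX_zero V K dh A B HK HQ); auto.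
     destruct (Rmult_integral _ _ E); auto. lra.
   - intros <-. rewrite (dXv_eq x x 0 Px Px (dX_refl V K x Px)).
     pose proof (Dhat_nonneg V K dh Hm x x Px Px). unfold Rmin; destruct Rle_dec; lra. }
 assert (H4 : forall x y, point K x -> point K y ->
        (forall u, x u <> 0 -> y u = 0) -> dt x y = Dhat dh x y).
 { intros x y Px Py Hd. unfold dt, Defs_dt. apply Rmin_left.
   pose proof (dX_disj V K dh A B HK HQ x y Px Py Hd). pose proof (Hle x y Px Py).
   nra. }
 exists dt. split; [|split; [|split; [|split]]].
 - split; [|split; [|split]].
   + intros x y Px Py. unfold dt, Defs_dt. pose proof (Dhat_nonneg V K dh Hm x y Px Py).
     pose proof (dXv_nonneg x y Px Py). unfold Rmin; destruct Rle_dec. lra.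
     apply Rmult_le_pos; lra.
   + exact Hzero.
   + intros x y Px Py. unfold dt, Defs_dt. rewrite (Dhat_sym V dh Hm x y).
     rewrite (dXv_eq y x (dXv V K x y) Py Px). reflexivity. apply dX_sym, dXv_spec; auto.
   + intros x y z Px Py Pz. unfold dt, Defs_dt.
     pose proof (Dhat_tri V K dh HK Hm x y z Px Py Pz).
     pose proof (dX_tri V K x y z _ _ _ (dXv_spec x y Px Py) (dXv_spec y z Py Pz) (dXv_spec x z Px Pz)).
     pose proof (Dhat_lip V K dh A B HK Hm HA HB HQ x y z _ Px (dXv_spec y z Py Pz)).
     pose proof (Dhat_lip V K dh A B HK Hm HA HB HQ z y x _ Pz (dX_sym V K _ _ _ (dXv_spec x y Px Py))).
     rewrite (Dhat_sym V dh Hm z y), (Dhat_sym V dh Hm z x) in H2.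
     pose proof (Rle_abs (Dhat dh x z - Dhat dh x y)) as R1. rewrite Rabs_minus_sym in R1.
     pose proof (Rle_abs (Dhat dh x z - Dhat dh y z)) as R2. rewrite Rabs_minus_sym in R2.
     pose proof (dXv_nonneg x y Px Py). pose proof (dXv_nonneg y z Py Pz).
     assert ((A + B) * dXv V K x z <= (A + B) * (dXv V K x y + dXv V K y z)) by (apply Rmult_le_compat_l; lra).
     assert (0 <= (A + B) * dXv V K x y) by (apply Rmult_le_pos; lra).
     assert (0 <= (A + B) * dXv V K y z) by (apply Rmult_le_pos; lra).
     unfold Rmin; repeat destruct Rle_dec; lra.
 - intros u v. destruct (classic (u = v)) as [<-|N].
   + rewrite (dh_refl V dh Hm). apply Hzero; auto; apply vtx_point; auto.
   + rewrite H4; try apply vtx_point; auto.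
     rewrite (Dhat_lists V K HK dh _ _ [u] [v]); try apply vtx_point; auto; try apply NoDup1.
     rewrite !lsum_cons, !lsum_nil, !vtx_u. ring.
     intros w Hw; left; symmetry; apply (vtx_supp V u w Hw).
     intros w Hw; left; symmetry; apply (vtx_supp V v w Hw).
     intros w Hw. apply vtx_supp in Hw. subst w. unfold vtx.
     destruct excluded_middle_informative; auto. congruence.
 - intros x y r Px Py H. unfold dt, Defs_dt. rewrite (dXv_eq x y r); auto.
 - exact H4.
 - intros x y Px Py. unfold dt, Defs_dt. split.
   + pose proof (Hle x y Px Py). pose proof (dXv_nonneg x y Px Py).
     assert (0 <= (A + B) * dXv V K x y) by (apply Rmult_le_pos; lra).
     apply Rmin_glb. lra. lra.
   + pose proof (Rmin_l (Dhat dh x y) (3 * (A + B) * dXv V K x y)). lra.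
Qed.
End Fin.

Theorem mainTheorem7 (V : Type) (K : list V -> Prop) (dh : V -> V -> R) (A B : R) :
  simplicial_complex K ->
  is_metric (fun _ : V => True) dh ->
  1 <= A -> 0 <= B ->
  (forall u v : V, exists n : nat, graph_dist K u v n /\
     / A * INR n - B <= dh u v /\ dh u v <= A * INR n + B) ->
  exists dt : (V -> R) -> (V -> R) -> R,
    is_metric (point K) dt /\
    (forall u v : V, dt (vtx u) (vtx v) = dh u v) /\
    (forall x y r, point K x -> point K y -> dX_is K x y r ->
        dt x y = Rmin (Dhat dh x y) (3 * (A + B) * r)) /\
    (forall x y, point K x -> point K y ->
        (forall u, x u <> 0 -> y u = 0) -> dt x y = Dhat dh x y) /\
    (forall x y, point K x -> point K y ->
        Dhat dh x y - 2 * (A + B) <= dt x y /\ dt x y <= Dhat dh x y + 2 * (A + B)).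
Proof.
  intros HK Hm HA HB HQ. eapply main_sec; eauto.
Qed.
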